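(* There exist $p\in(1,\infty)$ and $M<\infty$ such that for every menu $(R_\theta,p_\theta)_{\theta\in\Theta}$ that is individually rational and incentive compatible, the map $u:\Theta\to\mathbb R^2$, $u(\theta)=\big(U_\theta(R_\theta,p_\theta),\int_\Theta V_\vartheta(R_\vartheta,p_\vartheta)\,d\mu(\vartheta)\big)$, belongs to the Bochner space $L^p(\Theta,\mu;\mathbb R^2)$ and $\|u\|_{L^p}\le M$.
   Context: Setting (Yaari dual-utility insurance model). $(S,\Sigma,\mathbb P)$ is a probability space. Types: $\Theta=[\underline\theta,\bar\theta]$ with Borel $\sigma$-algebra and a probability measure $\mu$ with a Lebesgue density $q$. Fix $\bar L<\infty$. For each $\theta$ the type-$\theta$ agent faces a loss $L_\theta$ (bounded, $\Sigma$-measurable, values in $[0,\bar L]$) with continuous distribution function $F_\theta(l)=\mathbb P(L_\theta\le l)$. Retention functions: $\mathcal R=\{R:[0,\bar L]\to[0,\bar L]: R(0)=0,\ 0\le\partial R(l)/\partial l\le1\}$. A menu is a family $(R_\theta,p_\theta)_{\theta\in\Theta}$ with $R_\theta\in\mathcal R$, $p_\theta\in\mathbb R$. A distortion function is a nondecreasing $g:[0,1]\to[0,1]$ with $g(0)=0,g(1)=1$; type $\theta$ has distortion $g_\theta$, the insurer $g^{In}$. Utilities: $U_\theta(R,p)=-p-\int_0^{\bar L}[1-g_\theta(F_\theta(l))]\frac{\partial R(l)}{\partial l}dl$, $V_\theta(R,p)=p-\int_0^{\bar L}[1-g^{In}(F_\theta(l))](1-\frac{\partial R(l)}{\partial l})dl$,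 no-insurance utility $U_\theta(L_\theta,0)=-\int_0^{\bar L}[1-g_\theta(F_\theta(l))]dl$. Throughout, for every menu the maps $\theta\mapsto U_\theta(R_\theta,p_\theta)$, $\theta\mapsto V_\theta(R_\theta,p_\theta)$ lie in $L^1(\Theta,\mu)$. Individually rational: (P1) $U_\theta(R_\theta,p_\theta)\ge U_\theta(L_\theta,0)$ for all $\theta$ and (P2) $\int_\Theta V_\theta(R_\theta,p_\theta)d\mu\ge0$. Incentive compatible: $U_\theta(R_\theta,p_\theta)\ge U_\theta(R_{\theta'},p_{\theta'})$ for all $\theta,\theta'$. $L^p(\Theta,\mu;\mathbb R^2)$ is the Bochner space of strongly measurable $u$ with $\|u\|_{L^p}=(\int_\Theta\|u(\theta)\|^p d\mu)^{1/p}<\infty$, $\|\cdot\|$ the Euclidean norm. *)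

(* Defs.v *)
From HB Require Import structures.
From mathcomp Require Import all_boot all_order all_algebra.
From mathcomp Require Import all_classical all_reals all_analysis.
Set Implicit Arguments. Unset Strict Implicit. Unset Printing Implicit Defensive.
Import Order.TTheory GRing.Theory Num.Theory.
Import numFieldNormedType.Exports.
Local Open Scope classical_set_scope.
Local Open Scope ring_scope.

Section Yaari.
Variable R : realType.

Definition is_distortion (g : R -> R) : Prop :=
  [/\ g 0 = 0, g 1 = 1,
      (forall x, 0 <= x <= 1 -> 0 <= g x <= 1) &
      (forall x y, 0 <= x <= 1 -> 0 <= y <= 1 -> x <= y -> g x <= g y)].

Definition is_retention (Lbar : R) (f : R -> R) : Prop :=
  [/\ f 0 = 0,
      (forall l, 0 <= l <= Lbar -> 0 <= f l <= Lbar) &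
      (forall l, 0 <= l <= Lbar -> derivable f l 1 /\ 0 <= derive1 f l <= 1)].

Definition distfun d (S : measurableType d) (P : probability S R) (X : S -> R)
  (l : R) : R := fine (P [set s | X s <= l]).

Definition integral0L (Lbar : R) (h : R -> R) : R :=
  Rintegral (@lebesgue_measure R) `[0, Lbar]%classic h.

Definition Uutil (Lbar : R) (g F : R -> R) (f : R -> R) (p : R) : R :=
  - p - integral0L Lbar (fun l => (1 - g (F l)) * derive1 f l).

Definition Vutil (Lbar : R) (gIn F : R -> R) (f : R -> R) (p : R) : R :=
  p - integral0L Lbar (fun l => (1 - gIn (F l)) * (1 - derive1 f l)).

(* no-insurance utility U_theta(L_theta, 0) *)
Definition Unone (Lbar : R) (g F : R -> R) : R :=
  - integral0L Lbar (fun l => 1 - g (F l)).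

Definition euclid2 (a b : R) : R := Num.sqrt (a ^+ 2 + b ^+ 2).

(* u = (u1,u2) belongs to the Bochner space L^p(D, mu; R^2):
   strongly (= Borel, in finite dimension) measurable and
   int_D ||u||^p dmu < oo *)
Definition in_LpR2 d (T : measurableType d) (mu : {measure set T -> \bar R})
  (D : set T) (p : R) (u1 u2 : T -> R) : Prop :=
  [/\ measurable_fun D u1, measurable_fun D u2 &
      (\int[mu]_(x in D) ((euclid2 (u1 x) (u2 x)) `^ p)%:E < +oo)%E].

Definition LpR2_norm d (T : measurableType d) (mu : {measure set T -> \bar R})
  (D : set T) (p : R) (u1 u2 : T -> R) : R :=
  (fine (\int[mu]_(x in D) ((euclid2 (u1 x) (u2 x)) `^ p)%:E)) `^ p^-1.

End Yaari.

(* Main.v *)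
Require Import Defs.
From HB Require Import structures.
From mathcomp Require Import all_boot all_order all_algebra.
From mathcomp Require Import all_classical all_reals all_analysis.
From mathcomp Require Import lra.
Import Order.TTheory GRing.Theory Num.Theory.
Import numFieldNormedType.Exports.
Local Open Scope classical_set_scope.
Local Open Scope ring_scope.

Lemma int_bound (R : realType) d (T : measurableType d) (mu : {measure set T -> \bar R})
  (D : set T) (f : T -> R) (c : R) : measurable D -> 0 <= c ->
  (forall x, D x -> 0 <= f x <= c) ->
  (0 <= \int[mu]_(x in D) (f x)%:E <= c%:E * mu D)%E.
Proof.
move=> mD c0 hf; apply/andP; split.
  by apply: integral_ge0 => x /hf /andP[? _]; rewrite lee_fin.
rewrite -integral_cst//.
rewrite (ge0_integralE _ (f := fun x => (f x)%:E)); last first.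
  by move=> x /hf /andP[? _]; rewrite lee_fin.
rewrite (ge0_integralE _ (f := cst c%:E)); last by move=> x _; rewrite lee_fin.
apply: ereal_sup_le => _ [h hh <-]; exists h => //= x.
apply: (le_trans (hh x)).
rewrite /patch; case: ifP => // /set_mem /hf /andP[_ h2].
by rewrite lee_fin.
Qed.

Lemma int_bound1 (R : realType) d (T : measurableType d) (mu : {measure set T -> \bar R})
  (D : set T) (f : T -> R) (c : R) : measurable D -> mu D = 1%E -> 0 <= c ->
  (forall x, D x -> 0 <= f x <= c) ->
  (0 <= \int[mu]_(x in D) (f x)%:E <= c%:E)%E.
Proof. by move=> mD mu1 c0 hf; have := @int_bound R d T mu D f c mD c0 hf; rewrite mu1 mule1. Qed.

Lemma fine01 (R : realType) (x : \bar R) : (0 <= x)%E -> (x <= 1)%E -> 0 <= fine x <= 1.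
Proof. by case: x => [r| |] //=; rewrite !lee_fin => -> ->. Qed.

Lemma i0L_bound (R : realType) (Lbar : R) (h : R -> R) :
  (forall l, 0 <= l <= Lbar -> 0 <= h l <= 1) ->
  0 <= integral0L Lbar h <= Num.max Lbar 0.
Proof.
move=> hh; rewrite /integral0L /Rintegral.
have := @int_bound R _ _ (@lebesgue_measure R) `[0, Lbar]%classic h 1 (measurable_itv _) ler01.
move=> H; have {H} := H (fun l => hh l).
set X := (X in (_ * X)%E). set I := (integral _ _ _).
have EX : X = lebesgue_measure (`[0, Lbar]%classic : set R) := erefl.
rewrite EX lebesgue_measure_itv /= lte_fin mul1e.
case: ifPn => [L0|L0].
  rewrite -EFinD subr0 => /andP[i0 i1].
  have fi : I \is a fin_num.
    by rewrite ge0_fin_numE// (le_lt_trans i1) ?ltry.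
  rewrite fine_ge0//=; move: i1; rewrite -(fineK fi) lee_fin => /le_trans; apply.
  by rewrite le_max lexx.
move=> /andP[i0 i1]; have -> : I = 0%E.
  by apply/eqP; rewrite eq_le i0 i1.
by rewrite /= lexx le_max lexx orbT.
Qed.

Lemma cst_le_Rint (R : realType) (mu : probability R R) (D : set R) (f : R -> R) (c : R) :
  measurable D -> fine (mu D) = 1 -> mu.-integrable D (EFin \o f) ->
  (forall x, D x -> c <= f x) -> c <= Rintegral mu D f.
Proof.
move=> mD muD iF hf.
have := @le_Rintegral _ _ _ mu D (cst c) f mD (finite_measure_integrable_cst _ _ mD) iF hf.
by rewrite Rintegral_cst// muD mulr1.
Qed.

Lemma Rint_sum_le0 (R : realType) (mu : probability R R) (D : set R) (f g : R -> R) :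
  measurable D -> mu.-integrable D (EFin \o f) -> mu.-integrable D (EFin \o g) ->
  (forall x, D x -> f x + g x <= 0) -> Rintegral mu D f + Rintegral mu D g <= 0.
Proof.
move=> mD iF iG hf; rewrite -RintegralD//.
have := @le_Rintegral _ _ _ mu D (fun x => f x + g x) (cst 0) mD
  (integrableD mD iF iG) (finite_measure_integrable_cst _ _ mD) hf.
by rewrite Rintegral_cst// mul0r.
Qed.

Lemma aux_diff (R : realType) (p a b K u : R) :
  0 <= b -> a <= K -> - p - a <= u -> (- p - b) - K <= u.
Proof. move=> *; lra. Qed.

Lemma aux_uv (R : realType) (p a b : R) : 0 <= a -> 0 <= b -> (- p - a) + (p - b) <= 0.
Proof. move=> *; lra. Qed.

Lemma aux_up (R : realType) (u K IU IV : R) : u - K <= IU -> IU + IV <= 0 -> 0 <= IV -> u <= K.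
Proof. move=> *; lra. Qed.

Lemma aux_iv (R : realType) (K IU IV : R) : - K <= IU -> IU + IV <= 0 -> IV <= K.
Proof. move=> *; lra. Qed.

Lemma aux_sq (R : realType) (x y K : R) : - K <= x -> x <= K -> 0 <= y -> y <= K ->
  x ^+ 2 + y ^+ 2 <= 2 * K ^+ 2.
Proof. move=> *; nra. Qed.

Theorem lemma1 (R : realType)
  (* probability space (S, Sigma, P) *)
  (d : measure_display) (S : measurableType d) (P : probability S R)
  (* types Theta = [thl, thh], type distribution mu with Lebesgue density q *)
  (thl thh : R) (mu : probability R R) (q : R -> R)
  (Hmu_supp : mu `[thl, thh]%classic = 1%E)
  (Hq_meas : measurable_fun setT q) (Hq_ge0 : forall x, 0 <= q x)
  (Hdens : forall A : set R, measurable A ->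
     mu A = (\int[@lebesgue_measure R]_(x in A) (q x)%:E)%E)
  (* losses *)
  (Lbar : R) (L : R -> S -> R)
  (HL_meas : forall th, thl <= th <= thh -> measurable_fun setT (L th))
  (HL_bd : forall th, thl <= th <= thh -> forall s, 0 <= L th s <= Lbar)
  (HF_cont : forall th, thl <= th <= thh -> continuous (distfun P (L th)))
  (* distortions *)
  (g : R -> R -> R) (gIn : R -> R)
  (Hg : forall th, thl <= th <= thh -> is_distortion (g th))
  (HgIn : is_distortion gIn) :
  exists p M : R, 1 < p /\
   forall (Rm : R -> R -> R) (pm : R -> R),
   (* (Rm, pm) is a menu *)
   (forall th, thl <= th <= thh -> is_retention Lbar (Rm th)) ->
   (* standing assumption: U and V maps of the menu lie in L^1(Theta, mu) *)
   mu.-integrable `[thl, thh]%classic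
      (fun th => (Uutil Lbar (g th) (distfun P (L th)) (Rm th) (pm th))%:E) ->
   mu.-integrable `[thl, thh]%classic
      (fun th => (Vutil Lbar gIn (distfun P (L th)) (Rm th) (pm th))%:E) ->
   (* individual rationality (P1) *)
   (forall th, thl <= th <= thh ->
      Unone Lbar (g th) (distfun P (L th))
        <= Uutil Lbar (g th) (distfun P (L th)) (Rm th) (pm th)) ->
   (* individual rationality (P2) *)
   0 <= Rintegral mu `[thl, thh]%classic
          (fun th => Vutil Lbar gIn (distfun P (L th)) (Rm th) (pm th)) ->
   (* incentive compatibility *)
   (forall th th', thl <= th <= thh -> thl <= th' <= thh ->
      Uutil Lbar (g th) (distfun P (L th)) (Rm th') (pm th')
        <= Uutil Lbar (g th) (distfun P (L th)) (Rm th) (pm th)) ->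
   let u1 := fun th => Uutil Lbar (g th) (distfun P (L th)) (Rm th) (pm th) in
   let u2 := fun _ : R => Rintegral mu `[thl, thh]%classic
          (fun th => Vutil Lbar gIn (distfun P (L th)) (Rm th) (pm th)) in
   in_LpR2 mu `[thl, thh]%classic p u1 u2 /\ LpR2_norm mu `[thl, thh]%classic p u1 u2 <= M.
Proof.
pose K := Num.max Lbar 0.
have K0 : 0 <= K by rewrite le_max lexx orbT.
exists 2, ((2 * K ^+ 2) `^ 2^-1); split; first lra.
move=> Rm pm Hret iU iV P1 P2 IC u1 u2.
set D := `[thl, thh]%classic.
have mD : measurable D by exact: measurable_itv.
have hD : forall th, D th -> thl <= th <= thh.
  by move=> th; rewrite /D /= in_itv.
have hF : forall th, thl <= th <= thh -> forall l, 0 <= distfun P (L th) l <= 1.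
  move=> th hth l; apply: fine01 => //.
  have -> : [set s | L th s <= l] = L th @^-1` `]-oo, l]%classic.
    by apply/seteqP; split => s /=; rewrite in_itv.
  apply: probability_le1; rewrite -[X in measurable X]setTI.
  apply: (HL_meas th hth measurableT); exact: measurable_itv.
have hg : forall th, thl <= th <= thh -> forall x, 0 <= x <= 1 -> 0 <= 1 - g th x <= 1.
  move=> th hth x hx; case: (Hg th hth) => _ _ h _.
  have /andP[a b] := h x hx; apply/andP; split; lra.
have hgIn : forall x, 0 <= x <= 1 -> 0 <= 1 - gIn x <= 1.
  move=> x hx; case: HgIn => _ _ h _.
  have /andP[a b] := h x hx; apply/andP; split; lra.
have m01 : forall a b : R, 0 <= a <= 1 -> 0 <= b <= 1 -> 0 <= a * b <= 1.
  move=> a b /andP[a0 a1] /andP[b0 b1]; apply/andP; split.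
    exact: mulr_ge0.
  exact: mulr_ile1.
have hI : forall th th', thl <= th <= thh -> thl <= th' <= thh ->
    0 <= integral0L Lbar (fun l => (1 - g th (distfun P (L th) l)) * derive1 (Rm th') l) <= K.
  move=> th th' hth hth'; apply: i0L_bound => l hl.
  have [_ _ /(_ l hl) [_ hd]] := Hret th' hth'.
  exact: m01 (hg th hth _ (hF th hth l)) hd.
have hJ : forall th, thl <= th <= thh ->
    0 <= integral0L Lbar (fun l => (1 - gIn (distfun P (L th) l)) * (1 - derive1 (Rm th) l)) <= K.
  move=> th hth; apply: i0L_bound => l hl.
  have [_ _ /(_ l hl) [_ /andP[d0 d1]]] := Hret th hth.
  apply: m01 (hgIn _ (hF th hth l)) _; apply/andP; split; lra.
have hN : forall th, thl <= th <= thh ->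
    0 <= integral0L Lbar (fun l => 1 - g th (distfun P (L th) l)) <= K.
  move=> th hth; apply: i0L_bound => l hl; exact: (hg th hth _ (hF th hth l)).
pose v th := Vutil Lbar gIn (distfun P (L th)) (Rm th) (pm th).
have Ulow : forall th, D th -> - K <= u1 th.
  move=> th /hD hth; apply: le_trans (P1 th hth).
  have /andP[a b] := hN th hth; by rewrite /Unone lerN2.
have Udiff : forall th th', D th -> D th' -> u1 th' - K <= u1 th.
  move=> th th' /hD hth /hD hth'.
  have /andP[a b] := hI th th' hth hth'; have /andP[c e] := hI th' th' hth' hth'.
  exact: aux_diff c b (IC th th' hth hth').
have UV : forall th, D th -> u1 th + v th <= 0.
  move=> th /hD hth; have /andP[a b] := hI th th hth hth; have /andP[c e] := hJ th hth.
  exact: aux_uv.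
have muD : fine (mu D) = 1 by rewrite Hmu_supp.
have icst : forall k : R, mu.-integrable D (EFin \o cst k).
  by move=> k; exact: finite_measure_integrable_cst.
have iU' : mu.-integrable D (EFin \o u1) by exact: iU.
have iV' : mu.-integrable D (EFin \o v) by exact: iV.
pose IU := Rintegral mu D u1.
pose IV := Rintegral mu D v.
have IUV : IU + IV <= 0 := @Rint_sum_le0 R mu D u1 v mD iU' iV' UV.
have IUlow : - K <= IU := @cst_le_Rint R mu D u1 _ mD muD iU' Ulow.
have u1up : forall th, D th -> u1 th <= K.
  move=> th Dth.
  have h : u1 th - K <= IU := @cst_le_Rint R mu D u1 _ mD muD iU' (fun th' Dth' => Udiff th' th Dth' Dth).
  have P2' : 0 <= IV by [].
  exact: aux_up h IUV P2'.
have P2' : 0 <= IV by [].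
have IVup : IV <= K by exact: aux_iv IUlow IUV.
have u2b : forall th, 0 <= u2 th <= K.
  by move=> th; rewrite /u2; apply/andP; split; [exact: P2'| exact: IVup].
have hb : forall th, D th -> 0 <= euclid2 (u1 th) (u2 th) `^ 2 <= 2 * K ^+ 2.
  move=> th Dth; rewrite powR_ge0 /=.
  rewrite powR_mulrn ?sqrtr_ge0// sqr_sqrtr ?addr_ge0 ?sqr_ge0//.
  have := Ulow th Dth; have := u1up th Dth; have /andP[a b] := u2b th.
  move=> c e; exact: aux_sq.
have K2 : 0 <= 2 * K ^+ 2 by rewrite mulr_ge0 ?sqr_ge0.
have := @int_bound1 R _ _ mu D _ _ mD Hmu_supp K2 hb => /andP[i0 i1].
have fi : (\int[mu]_(x in D) ((euclid2 (u1 x) (u2 x)) `^ 2)%:E)%E \is a fin_num.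
  by rewrite ge0_fin_numE// (le_lt_trans i1) ?ltry.
split.
  split.
  - by apply/measurable_realfun.measurable_EFinP; case/integrableP: iU'.
  - exact: measurable_cst.
  - by rewrite (le_lt_trans i1) ?ltry.
rewrite /LpR2_norm; apply: ge0_ler_powR.
- by rewrite invr_ge0.
- by rewrite nnegrE fine_ge0.
- by rewrite nnegrE.
- by move: i1; rewrite -(fineK fi) lee_fin.
Qed.
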